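(* Let $n\ge1$ and $T\in I^\ell(n)$. Then: - the socle of $T$ is isomorphic to $S_1$; - the cosocle (top) of $T$ is isomorphic to $S_0$; - let $W\subseteq T$ be the socle; the module $\ker\big(T/W\to S_0\big)$ (kernel of the map induced by the projection to the cosocle) is isomorphic to a point of $I^r(n-1)$.
   Context: **The preprojective algebra.** $\Pi$ is the completed preprojective algebra of the quiver with vertices $0,1$ and arrows $\alpha,\beta:0\to1$, $\alpha^*,\beta^*:1\to0$. It is the path algebra, completed with respect to the ideal generated by the arrows, modulo the relations $\alpha\alpha^*+\beta\beta^*=0$ and $\alpha^*\alpha+\beta^*\beta=0$. A finite-dimensional $\Pi$-module is a graded space $V=V_0\oplus V_1$ with linear maps $t_\alpha,t_\beta:V_0\to V_1$ and $t_{\alpha^*},t_{\beta^*}:V_1\to V_0$ such that: - $t_\alpha t_{\alpha^*}+t_\beta t_{\beta^*}=0$ and $t_{\alpha^*}t_\alpha+t_{\beta^*}t_\beta=0$; - all sufficiently long composites of these maps along paths vanish. Its dimension vector is $(\dim V_0)\alpha_0+(\dim V_1)\alpha_1$, and we put $\delta=\alpha_0+\alpha_1$. $S_0,S_1$ are the simple modules of dimension vectors $\alpha_0,\alpha_1$. $\Pi(\mu)$ is the variety of module structures on a fixed graded space of dimension vector $\mu$. **The varieties $I^\ell(n)$ and $I^r(n)$.** - $I^\ell(n)$ is the set of $T\in\Pi(n\delta)$ with $t_\alpha$ invertible and $t_{\beta^*}t_\alpha$ nilpotent of order exactly $n$, i.e. $(t_{\beta^*}t_\alpha)^n=0\ne(t_{\beta^*}t_\alpha)^{n-1}$.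 - $I^r(n)$ is the set of $T\in\Pi(n\delta)$ with $t_{\beta^*}$ invertible and $t_\alpha t_{\beta^*}$ nilpotent of order exactly $n$. - $I^r(0)$ consists of the zero module. *)

(* Defs.v *)
(* Modules over the (completed) preprojective algebra Pi of the
   Kronecker-doubled quiver 0 => 1 (arrows alpha, beta : 0 -> 1 and
   alpha*, beta* : 1 -> 0), over an arbitrary field F.
   Convention: vectors are ROW vectors, a linear map V_i -> V_j is a
   'M_(dim V_i, dim V_j) matrix acting by v |-> v *m M; hence the composite
   "first g then f" (= f o g) has matrix  g *m f.
   Subspaces are represented (mxalgebra style) by square matrices via their
   row spaces. *)
From HB Require Import structures.
From mathcomp Require Import all_boot all_algebra.
Set Implicit Arguments. Unset Strict Implicit. Unset Printing Implicit Defensive.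
Import GRing.Theory.
Local Open Scope ring_scope.

Inductive arrow := Alpha | Beta | AlphaS | BetaS.

Section PiModules.
Variable F : fieldType.

Record rep := Rep {
  d0 : nat; d1 : nat;
  ta : 'M[F]_(d0, d1);
  tb : 'M[F]_(d0, d1);
  tas : 'M[F]_(d1, d0);
  tbs : 'M[F]_(d1, d0)
}.

Definition arrow_mx (T : rep) (a : arrow) : 'M[F]_(d0 T + d1 T) :=
  match a with
  | Alpha => block_mx 0 (ta T) 0 0
  | Beta => block_mx 0 (tb T) 0 0
  | AlphaS => block_mx 0 0 (tas T) 0
  | BetaS => block_mx 0 0 (tbs T) 0
  end.

Definition path_mx (T : rep) (s : seq arrow) : 'M[F]_(d0 T + d1 T) :=
  foldr (fun a M => arrow_mx T a *m M) 1%:M s.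

Definition is_pimod (T : rep) : Prop :=
  [/\ tas T *m ta T + tbs T *m tb T = 0,
      ta T *m tas T + tb T *m tbs T = 0 &
      exists m : nat, forall s : seq arrow, (m <= size s)%N -> path_mx T s = 0].

Definition subsp (T : rep) := ('M[F]_(d0 T) * 'M[F]_(d1 T))%type.

Definition sub0 (T : rep) : subsp T := (0, 0).
Definition subT (T : rep) : subsp T := (1%:M, 1%:M).

Definition subsp_le (T : rep) (U V : subsp T) : Prop :=
  (U.1 <= V.1)%MS /\ (U.2 <= V.2)%MS.
Definition subsp_eq (T : rep) (U V : subsp T) : Prop :=
  (U.1 == V.1)%MS /\ (U.2 == V.2)%MS.

Definition submod (T : rep) (U : subsp T) : Prop :=
  [/\ (U.1 *m ta T <= U.2)%MS, (U.1 *m tb T <= U.2)%MS,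
      (U.2 *m tas T <= U.1)%MS & (U.2 *m tbs T <= U.1)%MS].

Definition simple_sub (T : rep) (U : subsp T) : Prop :=
  [/\ submod U, ~ subsp_eq U (sub0 T) &
      forall V : subsp T, submod V -> subsp_le V U ->
        subsp_eq V (sub0 T) \/ subsp_eq V U].

Definition maximal_sub (T : rep) (M : subsp T) : Prop :=
  [/\ submod M, ~ subsp_eq M (subT T) &
      forall V : subsp T, submod V -> subsp_le M V ->
        subsp_eq V M \/ subsp_eq V (subT T)].

Definition is_socle (T : rep) (W : subsp T) : Prop :=
  (forall U, simple_sub U -> subsp_le U W) /\
  exists s : seq (subsp T),
    (forall U, U \in s -> simple_sub U) /\
    subsp_eq W ((\sum_(U <- s) U.1)%MS, (\sum_(U <- s) U.2)%MS).

Definition is_radical (T : rep) (R : subsp T) : Prop :=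
  (forall M, maximal_sub M -> subsp_le R M) /\
  exists s : seq (subsp T),
    (forall M, M \in s -> maximal_sub M) /\
    subsp_eq R ((\bigcap_(M <- s) M.1)%MS, (\bigcap_(M <- s) M.2)%MS).

(* X is isomorphic to the subquotient module U/W of T (W <= U submodules):
   there is a bijective module homomorphism X -> U/W, given by
   v |-> (v *m f0, v *m f1) modulo W. *)
Definition iso_subquot (X T : rep) (U W : subsp T) : Prop :=
  submod U /\ submod W /\ subsp_le W U /\
  exists (f0 : 'M[F]_(d0 X, d0 T)) (f1 : 'M[F]_(d1 X, d1 T)),
    (f0 <= U.1)%MS /\ (f1 <= U.2)%MS /\
    (ta X *m f1 - f0 *m ta T <= W.2)%MS /\
    (tb X *m f1 - f0 *m tb T <= W.2)%MS /\
    (tas X *m f0 - f1 *m tas T <= W.1)%MS /\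
    (tbs X *m f0 - f1 *m tbs T <= W.1)%MS /\
    (forall v : 'rV[F]_(d0 X), (v *m f0 <= W.1)%MS -> v = 0) /\
    (forall v : 'rV[F]_(d1 X), (v *m f1 <= W.2)%MS -> v = 0) /\
    (U.1 <= f0 + W.1)%MS /\ (U.2 <= f1 + W.2)%MS.

Definition S0 : rep := @Rep 1 0 0 0 0 0.
Definition S1 : rep := @Rep 0 1 0 0 0 0.

Definition nil_order (m : nat) (M : 'M[F]_m) (k : nat) : Prop :=
  M ^+ k = 0 /\ M ^+ k.-1 <> 0.

Definition repn (n : nat) (A B As Bs : 'M[F]_n) : rep := @Rep n n A B As Bs.

Definition in_Il (n : nat) (A B As Bs : 'M[F]_n) : Prop :=
  [/\ is_pimod (repn A B As Bs), A \in unitmx & nil_order (A *m Bs) n].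

Definition in_Ir (n : nat) (A B As Bs : 'M[F]_n) : Prop :=
  match n with
  | 0 => True
  | _.+1 => [/\ is_pimod (repn A B As Bs), Bs \in unitmx & nil_order (Bs *m A) n]
  end.

End PiModules.

Arguments is_socle {F} T W.
Arguments is_radical {F} T R.
Arguments iso_subquot {F} X T U W.

(* Main.v *)
Require Import Defs.
From HB Require Import structures.
From mathcomp Require Import all_boot all_algebra.
Set Implicit Arguments. Unset Strict Implicit. Unset Printing Implicit Defensive.
Import GRing.Theory.
Local Open Scope ring_scope.


Lemma powS_sub (F : fieldType) n (N : 'M[F]_n) i : (N ^+ i.+1 <= N ^+ i)%MS.
Proof. by rewrite exprS -mulmxE submxMl. Qed.

Lemma nil_stab (F : fieldType) n (N : 'M[F]_n) i k :
  \rank (N ^+ i.+1) = \rank (N ^+ i) -> N ^+ k = 0 -> N ^+ i = 0.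
Proof.
move=> hr hk.
have e1 : (N ^+ i.+1 :=: N ^+ i)%MS.
  apply/eqmxP; rewrite -(mxrank_leqif_eq (powS_sub N i)) hr //.
have ej : forall j, (N ^+ (i + j) :=: N ^+ i)%MS.
  elim=> [|j IH]; first by rewrite addn0.
  rewrite addnS -addSn exprD -mulmxE.
  apply: eqmx_trans (eqmxMr _ e1) _.
  by rewrite mulmxE -exprD.
apply/eqP; rewrite -submx0 -(ej k) exprD hk mulr0 submx0 //.
Qed.

Lemma nil_rank (F : fieldType) n (N : 'M[F]_n) :
  (0 < n)%N -> N ^+ n = 0 -> N ^+ n.-1 != 0 -> \rank N = n.-1.
Proof.
move=> n0 hn hn1.
have cl : forall j, (j <= n.-1)%N -> (j < \rank (N ^+ (n.-1 - j)))%N.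
  elim=> [|j IH] hj.
    by rewrite subn0 lt0n mxrank_eq0.
  have := IH (ltnW hj).
  have e : (n.-1 - j = (n.-1 - j.+1).+1)%N by rewrite subnS prednK // subn_gt0.
  rewrite e => h; apply: leq_ltn_trans h _.
  rewrite ltn_neqAle mxrankS ?powS_sub // andbT.
  apply/eqP => hr; have := nil_stab hr hn => h0.
  move: hn1; have -> : n.-1 = ((n.-1 - j.+1) + j.+1)%N by rewrite subnK.
  by rewrite exprD h0 mul0r eqxx.
apply/eqP; rewrite eqn_leq; apply/andP; split.
  rewrite -ltnS prednK //.
  have hle : (\rank N <= n)%N by apply: leq_trans (mxrankS (submx1 N)) _; rewrite mxrank1.
  rewrite ltn_neqAle hle andbT; apply/eqP => hr.
  have : \rank (N ^+ 1) = \rank (N ^+ 0) by rewrite expr1 expr0 hr mxrank1.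
  move/nil_stab/(_ hn); rewrite expr0 => /eqP; rewrite -mxrank_eq0 mxrank1.
  by rewrite eqn0Ngt n0.
case: n n0 N hn hn1 cl => // [[|n]] _ N hn hn1 cl //=.
by have := cl n (leqnSn n); rewrite /= subSnn expr1.
Qed.



Lemma swapk (F : fieldType) n (X Y : 'M[F]_n) k :
  (X *m Y) ^+ k *m X = X *m (Y *m X) ^+ k.
Proof.
elim: k => [|k IH]; first by rewrite !expr0 mul1mx mulmx1.
by rewrite !exprS -!mulmxE -!mulmxA IH !mulmxA.
Qed.

Lemma KAs (F : fieldType) n (A B As Bs : 'M[F]_n) :
  A \in unitmx -> As *m A + Bs *m B = 0 -> kermx Bs *m As = 0.
Proof.
move=> hA r1.
have -> : As = - (Bs *m B) *m invmx A.
  by rewrite -(mulmxK hA As); congr (_ *m _); by apply/eqP; rewrite -addr_eq0 r1.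
by rewrite mulNmx mulmxN !mulmxA mulmx_ker !mul0mx oppr0.
Qed.

Lemma AsBs (F : fieldType) n (A B As Bs : 'M[F]_n) :
  A \in unitmx -> A *m As + B *m Bs = 0 -> (As <= Bs)%MS.
Proof.
move=> hA r0.
have -> : As = invmx A *m (- (B *m Bs)).
  rewrite -[LHS](mulKmx hA As); congr (_ *m _); by apply/eqP; rewrite -addr_eq0 r0.
by rewrite mulmxN -mulNmx mulmxA submxMl.
Qed.

Lemma ker_sub0 (F : fieldType) n p (Bs : 'M[F]_n) (k : 'M[F]_(p, n)) :
  (k <= kermx Bs)%MS -> k *m Bs = 0.
Proof. by rewrite sub_kermx => /eqP. Qed.

Lemma ker_subAs (F : fieldType) n p (A B As Bs : 'M[F]_n) (k : 'M[F]_(p, n)) :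
  A \in unitmx -> As *m A + Bs *m B = 0 ->
  (k <= kermx Bs)%MS -> k *m As = 0.
Proof. by move=> hA r1 /submxP [D ->]; rewrite -mulmxA (KAs hA r1) mulmx0. Qed.



Lemma Mpow0 (F : fieldType) n (A Bs : 'M[F]_n) :
  A \in unitmx -> (A *m Bs) ^+ n = 0 -> (Bs *m A) ^+ n = 0.
Proof.
move=> hA hN; rewrite -(mulKmx hA ((Bs *m A) ^+ n)) -swapk hN mul0mx mulmx0 //.
Qed.

Lemma simple_le (F : fieldType) n (A B As Bs : 'M[F]_n)
  (U : subsp (repn A B As Bs)) :
  A \in unitmx -> As *m A + Bs *m B = 0 -> (A *m Bs) ^+ n = 0 ->
  simple_sub U -> subsp_le U (0, kermx Bs).
Proof.
move=> hA r1 hN [sU nz hmin].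
have fA : row_free A by rewrite row_free_unit.
case: U sU nz hmin => U1 U2 /= [/= s1 _ _ s4] nz hmin.
set V : subsp (repn A B As Bs) := (0, (U2 :&: kermx Bs)%MS).
have sV : submod V.
  split=> /=; rewrite ?mul0mx ?sub0mx //.
    by rewrite (ker_subAs hA r1 (capmxSr _ _)) sub0mx.
  by rewrite (ker_sub0 (capmxSr _ _)) sub0mx.
have leV : subsp_le V (U1, U2) by split; rewrite /= ?sub0mx ?capmxSl.
case: (hmin V sV leV) => [[_ h0]|[h1 h2]]; last first.
  split => /=; first by case/andP: h1.
  by move/eqmxP: h2 => <-; rewrite capmxSr.
exfalso; apply: nz.
have rk : \rank (U2 *m (Bs *m A)) = \rank U2.
  rewrite mulmxA mxrankMfree // -(mxrank_mul_ker U2 Bs).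
  by move/eqmxP: h0 => ->; rewrite mxrank0 addn0.
have sub : (U2 *m (Bs *m A) <= U2)%MS.
  by rewrite mulmxA; apply: submx_trans (submxMr _ s4) s1.
have e1 : (U2 *m (Bs *m A) :=: U2)%MS.
  by apply/eqmxP; rewrite -(mxrank_leqif_eq sub) rk.
have ek : forall k, (U2 *m (Bs *m A) ^+ k :=: U2)%MS.
  elim=> [|k IH]; first by rewrite expr0 mulmx1.
  rewrite exprSr -mulmxE (mulmxA U2); exact: eqmx_trans (eqmxMr (Bs *m A) IH) e1.
have U20 : U2 = 0.
  by apply/eqP; rewrite -submx0 -(ek n) (Mpow0 hA hN) mulmx0 sub0mx.
have U10 : U1 = 0.
  apply/eqP; rewrite -(mulmx_free_eq0 _ fA) -submx0.
  by rewrite U20 in s1.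
by rewrite /subsp_eq /= U10 U20; split; rewrite sub0mx.
Qed.

Lemma max_ge (F : fieldType) n (A B As Bs : 'M[F]_n)
  (M : subsp (repn A B As Bs)) :
  (0 < n)%N -> A \in unitmx -> A *m As + B *m Bs = 0 -> (A *m Bs) ^+ n = 0 ->
  maximal_sub M -> @subsp_le F (repn A B As Bs) (Bs, 1%:M) M.
Proof.
move=> n0 hA r0 hN [sM nt hmax].
case: M sM nt hmax => M1 M2 /= [/= s1 _ _ s4] nt hmax.
set V : subsp (repn A B As Bs) := ((M1 + Bs)%MS, 1%:M).
have sV : submod V.
  split=> /=; rewrite ?submx1 // mul1mx.
    exact: submx_trans (AsBs hA r0) (addsmxSr _ _).
  exact: addsmxSr.
have leV : subsp_le (M1, M2) V by split; rewrite /= ?submx1 ?addsmxSl.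
case: (hmax V sV leV) => [[/= h1 h2]|[/= h1 _]].
  split => /=; last by case/andP: h2.
  by case/andP: h1; rewrite addsmx_sub => /andP [].
exfalso; apply: nt.
have BsN : (Bs <= A *m Bs)%MS.
  by rewrite -{1}(mulKmx hA Bs) submxMl.
have MN : (M1 *m (A *m Bs) <= M1)%MS.
  by rewrite mulmxA; apply: submx_trans (submxMr _ _) s4.
have base : (1%:M <= M1 + A *m Bs)%MS.
  case/andP: h1 => _ h; apply: submx_trans h _.
  by apply: addsmxS => //.
have cl : forall k, (1%:M <= M1 + (A *m Bs) ^+ k.+1)%MS.
  elim=> [|k IH]; first by rewrite expr1.
  apply: submx_trans base _; rewrite addsmx_sub addsmxSl /=.
  have h := submxMr (A *m Bs) IH; rewrite mul1mx addsmxMr in h.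
  apply: submx_trans h _; apply: addsmxS => //.
  by rewrite [X in (_ <= X)%MS]exprSr -mulmxE submx_refl.
have := cl n.-1; rewrite prednK // hN addsmx0 => h1M.
split => /=; first by rewrite submx1.
rewrite submx1 /=.
have : (1%:M <= A)%MS by rewrite sub1mx row_full_unit.
move=> h; apply: submx_trans h _.
by rewrite -{1}(mul1mx A); apply: submx_trans (submxMr _ h1M) _.
Qed.



Lemma S_simple (F : fieldType) n (A B As Bs : 'M[F]_n) :
  (0 < n)%N -> A \in unitmx -> As *m A + Bs *m B = 0 -> \rank Bs = n.-1 ->
  @simple_sub F (repn A B As Bs) (0, kermx Bs).
Proof.
move=> n0 hA r1 hrk.
have rK : \rank (kermx Bs) = 1%N by rewrite mxrank_ker hrk -subn1 subKn.
split.
- split=> /=; rewrite ?mul0mx ?sub0mx //.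
    by rewrite (ker_subAs hA r1 (submx_refl _)) sub0mx.
  by rewrite mulmx_ker sub0mx.
- move=> [_ /= /andP [h _]]; move: h; rewrite submx0 => /eqP h.
  by move: rK; rewrite h mxrank0.
- move=> [V1 V2] _ [/= h1 h2].
  have e1 : (V1 == (0 : 'M_n))%MS by apply/andP; split; [exact: h1|exact: sub0mx].
  have le1 : (\rank V2 <= 1)%N by rewrite -rK mxrankS.
  case: (\rank V2 =P 0%N) => [/eqP|hne].
    rewrite mxrank_eq0 => /eqP ->; left; split => //=; by rewrite sub0mx.
  right; split => //=.
  by rewrite -(mxrank_leqif_eq h2) rK; case: (\rank V2) hne le1 => [|[|]].
Qed.

Lemma R_max (F : fieldType) n (A B As Bs : 'M[F]_n) :
  (0 < n)%N -> A \in unitmx -> A *m As + B *m Bs = 0 -> \rank Bs = n.-1 ->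
  @maximal_sub F (repn A B As Bs) (Bs, 1%:M).
Proof.
move=> n0 hA r0 hrk.
split.
- split=> /=; rewrite ?submx1 ?mul1mx ?submx_refl //.
  exact: AsBs hA r0.
- move=> [h _]; move/andP: h => [_ h]; move: h; rewrite sub1mx /row_full hrk.
  by move=> /eqP h; move: n0; rewrite -ltn_predL h ltnn.
- move=> [V1 V2] _ [/= h1 h2].
  have e2 : (V2 == 1%:M)%MS by rewrite h2 submx1.
  have := mxrank_leqif_sup h1; rewrite hrk => le.
  case: (\rank V1 =P n) => [hr|hr].
    right; rewrite /subsp_eq /=; split; first by rewrite submx1 sub1mx /row_full hr eqxx.
    by apply/andP; split; [exact: submx1|exact: h2].
  left; rewrite /subsp_eq /=; split => //; rewrite h1 andbT.
  rewrite -(mxrank_leqif_sup h1) hrk.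
  have h3 := rank_leq_col V1.
  have lo : (n.-1 <= \rank V1)%N by rewrite -hrk mxrankS.
  rewrite eqn_leq lo /= -ltnS prednK // ltn_neqAle h3 andbT; exact/eqP.
Qed.



Lemma socle_eq (F : fieldType) n (A B As Bs : 'M[F]_n) (W : subsp (repn A B As Bs)) :
  (0 < n)%N -> A \in unitmx -> As *m A + Bs *m B = 0 -> (A *m Bs) ^+ n = 0 ->
  \rank Bs = n.-1 ->
  is_socle (repn A B As Bs) W -> subsp_eq W (0, kermx Bs).
Proof.
move=> n0 hA r1 hN hrk [hall [s [hs [/andP [e1 _] /andP [e2 _]]]]].
have [l1 l2] := hall _ (S_simple n0 hA r1 hrk).
have : (\sum_(U <- s) U.1 <= (0 : 'M_n))%MS && (\sum_(U <- s) U.2 <= kermx Bs)%MS.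
  elim: s hs {e1 e2} => [|U s IH] hs; first by rewrite !big_nil !sub0mx.
  rewrite !big_cons !addsmx_sub.
  have [h1 h2] := simple_le hA r1 hN (hs U (mem_head U s)).
  rewrite h1 h2 /=; apply: IH => V hV; apply: hs; by rewrite in_cons hV orbT.
case/andP => u1 u2; split; apply/andP; split => //.
  exact: submx_trans e1 u1.
exact: submx_trans e2 u2.
Qed.

Lemma rad_eq (F : fieldType) n (A B As Bs : 'M[F]_n) (R : subsp (repn A B As Bs)) :
  (0 < n)%N -> A \in unitmx -> A *m As + B *m Bs = 0 -> (A *m Bs) ^+ n = 0 ->
  \rank Bs = n.-1 ->
  is_radical (repn A B As Bs) R -> subsp_eq R (Bs, 1%:M).
Proof.
move=> n0 hA r0 hN hrk [hall [s [hs [/andP [_ e1] /andP [_ e2]]]]].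
have [l1 l2] := hall _ (R_max n0 hA r0 hrk).
have : (Bs <= \bigcap_(M <- s) M.1)%MS && (1%:M <= \bigcap_(M <- s) M.2)%MS.
  elim: s hs {e1 e2} => [|M s IH] hs; first by rewrite !big_nil !submx1.
  rewrite !big_cons !sub_capmx.
  have [h1 h2] := max_ge n0 hA r0 hN (hs M (mem_head M s)).
  rewrite h1 h2 /=; apply: IH => V hV; apply: hs; by rewrite in_cons hV orbT.
case/andP => u1 u2; split; apply/andP; split => //.
  exact: submx_trans u1 e1.
exact: submx_trans u2 e2.
Qed.

Lemma submod_eq (F : fieldType) (T : rep F) (U U' : subsp T) :
  subsp_eq U U' -> submod U' -> submod U.
Proof.
case: U U' => U1 U2 [U1' U2'] [/eqmxP /= e1 /eqmxP /= e2] [/= s1 s2 s3 s4].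
by split; rewrite /= ?(eqmxMr _ e1) ?(eqmxMr _ e2) ?e1 ?e2.
Qed.

Lemma iso_transfer (F : fieldType) (X T : rep F) (U U' W W' : subsp T) :
  subsp_eq U U' -> subsp_eq W W' -> iso_subquot X T U' W' -> iso_subquot X T U W.
Proof.
move=> eU eW [sU [sW [[l1 l2] [f0 [f1 [h1 [h2 [h3 [h4 [h5 [h6 [h7 [h8 [h9 h10]]]]]]]]]]]]]].
have sU' := submod_eq eU sU; have sW' := submod_eq eW sW.
case: U U' eU sU sU' l1 l2 h1 h2 h9 h10 => U1 U2 [U1' U2'] [/eqmxP /= e1 /eqmxP /= e2] _ sU' /= l1 l2 h1 h2 h9 h10.
case: W W' eW sW sW' l1 l2 h3 h4 h5 h6 h7 h8 h9 h10 => W1 W2 [W1' W2'] [/eqmxP /= g1 /eqmxP /= g2] _ sW' /= l1 l2 h3 h4 h5 h6 h7 h8 h9 h10.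
split => //; split => //; split; first by split; rewrite /= ?e1 ?e2 ?g1 ?g2.
exists f0, f1; rewrite /= ?e1 ?e2 ?g1 ?g2; do !split => //.
- by move=> v; rewrite g1; apply: h7.
- by move=> v; rewrite g2; apply: h8.
- by rewrite (adds_eqmx (eqmx_refl f0) g1).
- by rewrite (adds_eqmx (eqmx_refl f1) g2).
Qed.



Lemma flat_sub (F : fieldType) p k (M : 'M[F]_(0, p)) (Y : 'M[F]_(k, p)) : (M <= Y)%MS.
Proof. by rewrite flatmx0 sub0mx. Qed.

Lemma rank1_eq (F : fieldType) n (K : 'M[F]_n) :
  \rank K = 1%N -> (nz_row K :=: K)%MS.
Proof.
move=> rK; apply/eqmxP; rewrite -(mxrank_leqif_eq (nz_row_sub K)) rK rank_rV.
rewrite nz_row_eq0 -mxrank_eq0 rK //.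
Qed.

Lemma iso_socle (F : fieldType) n (A B As Bs : 'M[F]_n) :
  (0 < n)%N -> A \in unitmx -> As *m A + Bs *m B = 0 -> \rank Bs = n.-1 ->
  iso_subquot (S1 F) (repn A B As Bs) (0, kermx Bs) (sub0 _).
Proof.
move=> n0 hA r1 hrk.
have rK : \rank (kermx Bs) = 1%N by rewrite mxrank_ker hrk -subn1 subKn.
have [sS _ _] := S_simple n0 hA r1 hrk.
have ef := rank1_eq rK.
have ff : row_free (nz_row (kermx Bs)) by rewrite /row_free ef rK.
split => //; split; first by split; rewrite /= mul0mx sub0mx.
split; first by split; rewrite /= sub0mx.
exists 0, (nz_row (kermx Bs)); rewrite /=.
do !split; rewrite ?flat_sub ?sub0mx ?nz_row_sub //.
- by rewrite mul0mx sub0r (ker_subAs hA r1 (nz_row_sub _)) oppr0 sub0mx.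
- by rewrite mul0mx sub0r (ker_sub0 (nz_row_sub _)) oppr0 sub0mx.
- by move=> v _; apply: thinmx0.
- by move=> v; rewrite submx0 (mulmx_free_eq0 _ ff) => /eqP.
- by rewrite addsmx0 ef submx_refl.
Qed.

Lemma iso_top (F : fieldType) n (A B As Bs : 'M[F]_n) :
  (0 < n)%N -> A \in unitmx -> A *m As + B *m Bs = 0 -> \rank Bs = n.-1 ->
  iso_subquot (S0 F) (repn A B As Bs) (subT _) (Bs, 1%:M).
Proof.
move=> n0 hA r0 hrk.
have rC : \rank (Bs^C)%MS = 1%N by rewrite mxrank_compl hrk -subn1 subKn.
have [sR _ _] := R_max n0 hA r0 hrk.
have ef := rank1_eq rC.
have ff : row_free (nz_row (Bs^C)%MS) by rewrite /row_free ef rC.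
split; first by split; rewrite /= submx1.
split => //; split; first by split; rewrite /= submx1.
exists (nz_row (Bs^C)%MS), 0; rewrite /=.
do !split; rewrite ?flat_sub ?submx1 //.
- move=> v h; apply/eqP; rewrite -(mulmx_free_eq0 _ ff) -submx0 -(capmx_compl Bs).
  rewrite sub_capmx h /= -ef; exact: submxMl.
- by move=> v _; apply: thinmx0.
- by rewrite sub1mx /row_full (adds_eqmx ef (eqmx_refl Bs)) addsmxC; apply: addsmx_compl_full.
- exact: addsmxSr.
Qed.



Lemma path_inter (F : fieldType) (X T : rep F) p
  (Phi : 'M[F]_(d0 X + d1 X, d0 T + d1 T)) (Kb : 'M[F]_(p, d0 T + d1 T)) :
  (forall a, (arrow_mx X a *m Phi - Phi *m arrow_mx T a <= Kb)%MS) ->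
  (forall a, Kb *m arrow_mx T a = 0) ->
  forall s, (path_mx X s *m Phi - Phi *m path_mx T s <= Kb)%MS /\
            (Kb *m path_mx T s <= Kb)%MS.
Proof.
move=> ha hk; elim=> [|a s [IH1 IH2]] /=.
  by rewrite mul1mx mulmx1 subrr sub0mx mulmx1 submx_refl.
split; last by rewrite mulmxA hk mul0mx sub0mx.
have -> : arrow_mx X a *m path_mx X s *m Phi - Phi *m (arrow_mx T a *m path_mx T s)
   = arrow_mx X a *m (path_mx X s *m Phi - Phi *m path_mx T s)
     + (arrow_mx X a *m Phi - Phi *m arrow_mx T a) *m path_mx T s.
  rewrite mulmxBr mulmxBl !mulmxA addrA subrK //.
apply: addmx_sub; first exact: mulmx_sub IH1.
case/submxP: (ha a) => D ->; rewrite -mulmxA; exact: mulmx_sub IH2.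
Qed.

Lemma blk_inj (F : fieldType) m n p (f0 f1 : 'M[F]_(m, n)) (K : 'M[F]_n) (P : 'M[F]_(p, m + m)) :
  row_free f0 -> (forall q (C : 'M_(q, m)), (C *m f1 <= K)%MS -> C = 0) ->
  (P *m block_mx f0 0 0 f1 <= row_mx (0 : 'M_n) K)%MS -> P = 0.
Proof.
move=> ff0 inj1; rewrite -[P]hsubmxK mul_row_block !mulmx0 addr0 add0r.
case/submxP => D; rewrite mul_mx_row mulmx0 => /eq_row_mx [e1 e2].
have l0 : lsubmx P = 0 by apply/eqP; rewrite -(mulmx_free_eq0 _ ff0) e1.
have r0 : rsubmx P = 0 by apply: inj1; rewrite e2 submxMl.
by rewrite l0 r0 row_mx0.
Qed.

Lemma blk_sub (F : fieldType) m n r (x y : 'M[F]_(m, n)) (K : 'M[F]_(r, n)) :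
  (x - y <= K)%MS ->
  (block_mx (0 : 'M_(m, n)) x (0 : 'M_(m, n)) 0 - block_mx 0 y 0 0 <= row_mx (0 : 'M_(r, n)) K)%MS.
Proof.
move=> /submxP [D e].
rewrite opp_block_mx add_block_mx !subrr e block_mxEv col_mx_sub row_mx0 sub0mx andbT.
by rewrite -(mulmx0 _ D) -mul_mx_row submxMl.
Qed.

Lemma decomp (F : fieldType) p q r s (f1 : 'M[F]_(p, q)) (K : 'M[F]_(r, q)) (Y : 'M[F]_(s, q)) :
  (1%:M <= f1 + K)%MS -> exists C k, C *m f1 = Y + k /\ (k <= K)%MS.
Proof.
move=> h; have := submx_trans (submx1 Y) h; case/sub_addsmxP => u e.
exists u.1, (- (u.2 *m K)); split; first by rewrite e addrK.
by rewrite -mulNmx submxMl.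
Qed.

Lemma in_Ir_of (F : fieldType) m (A B As Bs : 'M[F]_m) :
  ((0 < m)%N -> [/\ is_pimod (repn A B As Bs), Bs \in unitmx & nil_order (Bs *m A) m]) ->
  in_Ir A B As Bs.
Proof. by case: m A B As Bs => [|k] A B As Bs h //=; apply: h. Qed.



Lemma expr_pred (R : pzSemiRingType) (x : R) k : (0 < k)%N -> x ^+ k = x * x ^+ k.-1.
Proof. by case: k => // k _; rewrite exprS. Qed.

Lemma third (F : fieldType) m (A B As Bs : 'M[F]_m.+1) :
  A \in unitmx -> As *m A + Bs *m B = 0 -> A *m As + B *m Bs = 0 ->
  (exists M0, forall s, (M0 <= size s)%N -> path_mx (repn A B As Bs) s = 0) ->
  (A *m Bs) ^+ m.+1 = 0 -> (A *m Bs) ^+ m != 0 -> \rank Bs = m ->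
  exists A' B' As' Bs' : 'M[F]_m,
    in_Ir A' B' As' Bs' /\
    iso_subquot (repn A' B' As' Bs') (repn A B As Bs) (Bs, 1%:M) (0, kermx Bs).
Proof.
move=> hA r1 r0 [M0 hM0] hN hN1 hrk.
have rK : \rank (kermx Bs) = 1%N by rewrite mxrank_ker hrk subSnn.
have : exists f0 : 'M_(\rank Bs, m.+1), row_free f0 /\ (f0 :=: Bs)%MS.
  by exists (row_base Bs); split; [exact: row_base_free | exact: eq_row_base].
rewrite hrk => -[f0 [ff0 ef0]].
have rC : \rank (kermx Bs)^C%MS = m by rewrite mxrank_compl rK subn1.
have : exists f1 : 'M_(\rank (kermx Bs)^C%MS, m.+1),
    [/\ row_free f1, (f1 :&: kermx Bs <= (0 : 'M_m.+1))%MS & (1%:M <= f1 + kermx Bs)%MS].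
  exists (row_base (kermx Bs)^C%MS); split; first exact: row_base_free.
    by rewrite (cap_eqmx (eq_row_base _) (eqmx_refl _)) capmxC capmx_compl sub0mx.
  by rewrite (adds_eqmx (eq_row_base _) (eqmx_refl _)) addsmxC sub1mx addsmx_compl_full.
rewrite rC => -[f1 [ff1 cf1 hf1]].
set K := kermx Bs in rK cf1 hf1 *.
have inj1 : forall q (C : 'M_(q, m)), (C *m f1 <= K)%MS -> C = 0.
  move=> q C h; apply/eqP; rewrite -(mulmx_free_eq0 _ ff1) -submx0.
  by apply: submx_trans cf1; rewrite sub_capmx h submxMl.
have kAs0 : forall p (k : 'M_(p, m.+1)), (k <= K)%MS -> k *m As = 0.
  by move=> p k; apply: ker_subAs hA r1.
have kBs0 : forall p (k : 'M_(p, m.+1)), (k <= K)%MS -> k *m Bs = 0.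
  by move=> p k; apply: ker_sub0.
have [A' [k1 [eA kA]]] := decomp (f0 *m A) hf1.
have [B' [k2 [eB kB]]] := decomp (f0 *m B) hf1.
have : (f1 *m As <= f0)%MS.
  by rewrite ef0; apply: submx_trans (submxMl _ _) (AsBs hA r0).
case/submxP => As' eAs.
have : (f1 *m Bs <= f0)%MS by rewrite ef0 submxMl.
case/submxP => Bs' eBs.
exists A', B', As', Bs'.
split; last first.
  have [sR _ _] := R_max (ltn0Sn m) hA r0 hrk.
  have [sS _ _] := S_simple (ltn0Sn m) hA r1 hrk.
  split => //; split => //; split; first by split; rewrite /= ?sub0mx ?submx1.
  exists f0, f1; rewrite /=.
  do !split.
  - by rewrite ef0 submx_refl.
  - exact: submx1.
  - by rewrite eA addrC addKr.
  - by rewrite eB addrC addKr.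
  - by rewrite eAs subrr sub0mx.
  - by rewrite eBs subrr sub0mx.
  - by move=> v; rewrite submx0 (mulmx_free_eq0 _ ff0) => /eqP.
  - by move=> v; apply: inj1.
  - by rewrite addsmx0 -ef0 submx_refl.
  - exact: hf1.
apply: in_Ir_of => m0.
have r1' : As' *m A' + Bs' *m B' = 0.
  apply: inj1; rewrite mulmxDl -!mulmxA eA eB !mulmxDr !mulmxA -eAs -eBs.
  rewrite addrACA -!mulmxA -mulmxDr r1 mulmx0 add0r.
  by apply: addmx_sub; apply: mulmx_sub.
have r0' : A' *m As' + B' *m Bs' = 0.
  apply/eqP; rewrite -(mulmx_free_eq0 _ ff0) mulmxDl -!mulmxA -eAs -eBs !mulmxA eA eB.
  rewrite !mulmxDl (kAs0 _ _ kA) (kBs0 _ _ kB) !addr0 -!mulmxA -mulmxDr r0 mulmx0 //.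
have hpath : exists M1, forall s, (M1 <= size s)%N -> path_mx (repn A' B' As' Bs') s = 0.
  have ha : forall a, (arrow_mx (repn A' B' As' Bs') a *m block_mx f0 0 0 f1
       - block_mx f0 0 0 f1 *m arrow_mx (repn A B As Bs) a <= row_mx (0 : 'M_m.+1) K)%MS.
    case; rewrite /= !mulmx_block !mul0mx !mulmx0 !addr0 !add0r.
    + by apply: blk_sub; rewrite eA addrC addKr.
    + by apply: blk_sub; rewrite eB addrC addKr.
    + by rewrite eAs subrr sub0mx.
    + by rewrite eBs subrr sub0mx.
  have hk : forall a, row_mx (0 : 'M_m.+1) K *m arrow_mx (repn A B As Bs) a = 0.
    case; rewrite /= mul_row_block ?mulmx0 ?mul0mx ?addr0 ?add0r ?row_mx0 //.
    + by rewrite (kAs0 _ _ (submx_refl K)) row_mx0.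
    + by rewrite (kBs0 _ _ (submx_refl K)) row_mx0.
  exists M0 => s hs.
  have [h _] := @path_inter F (repn A' B' As' Bs') (repn A B As Bs) m.+1 (block_mx f0 0 0 f1) (row_mx (0 : 'M_m.+1) K) ha hk s.
  move: h; rewrite (hM0 s hs) mulmx0 subr0 => h.
  exact: (blk_inj ff0 inj1 h).
have hu : Bs' \in unitmx.
  rewrite -row_free_unit /row_free eqn_leq rank_leq_row /=.
  have r0K : \rank (f1 :&: K)%MS = 0%N by apply/eqP; rewrite mxrank_eq0 -submx0.
  have e : \rank (Bs' *m f0) = m.
    by have := mxrank_mul_ker f1 Bs; rewrite -/K r0K addn0 (eqP ff1) eBs.
  by rewrite -[X in (X <= _)%N]e mxrankM_maxl.
have BsN : (Bs <= A *m Bs)%MS by rewrite -{1}(mulKmx hA Bs) submxMl.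
have cong : forall j, ((Bs' *m A') ^+ j *m f1 - f1 *m (Bs *m A) ^+ j <= K)%MS.
  elim=> [|j IH]; first by rewrite !expr0 mul1mx mulmx1 subrr sub0mx.
  set c := (Bs' *m A') ^+ j *m f1 - f1 *m (Bs *m A) ^+ j in IH.
  have e1 : Bs' *m A' *m f1 = f1 *m (Bs *m A) + Bs' *m k1.
    by rewrite -mulmxA eA mulmxDr mulmxA -eBs mulmxA.
  have ec : (Bs' *m A') ^+ j *m f1 = f1 *m (Bs *m A) ^+ j + c.
    by rewrite /c addrC subrK.
  have E : (Bs' *m A') ^+ j.+1 *m f1
      = f1 *m (Bs *m A) ^+ j.+1 + (c *m (Bs *m A) + (Bs' *m A') ^+ j *m (Bs' *m k1)).
    rewrite exprSr -mulmxE -mulmxA e1 mulmxDr mulmxA ec mulmxDl addrA.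
    by rewrite [in RHS]exprSr -mulmxE !mulmxA.
  rewrite E addrAC subrr add0r; apply: addmx_sub.
    by rewrite mulmxA (kBs0 _ _ IH) mul0mx sub0mx.
  by apply: mulmx_sub; apply: mulmx_sub.
have hL : (Bs' *m A') ^+ m = 0.
  apply: inj1.
  have h1 : (f1 *m (Bs *m A) ^+ m <= K)%MS.
    rewrite sub_kermx -mulmxA swapk.
    have : (f1 *m Bs <= A *m Bs)%MS by apply: submx_trans (submxMl _ _) BsN.
    case/submxP => D eD; rewrite mulmxA eD -mulmxA.
    have -> : A *m Bs *m (A *m Bs) ^+ m = (A *m Bs) ^+ m.+1 by rewrite exprS mulmxE.
    by rewrite hN mulmx0.
  rewrite -(subrK (f1 *m (Bs *m A) ^+ m) ((Bs' *m A') ^+ m *m f1)).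
  exact: addmx_sub (cong m) h1.
split; [by split | exact: hu | split => //].
move=> h0.
have := cong m.-1; rewrite h0 mul0mx sub0r eqmx_opp => hk.
have e2 : Bs *m (A *m Bs) ^+ m.-1 = 0.
  have := hf1; case/sub_addsmxP => u eu.
  have kh : K *m ((Bs *m A) ^+ m.-1 *m Bs) = 0.
    by rewrite swapk mulmxA (kBs0 _ _ (submx_refl K)) mul0mx.
  have fh : f1 *m ((Bs *m A) ^+ m.-1 *m Bs) = 0.
    by move: hk; rewrite sub_kermx mulmxA => /eqP.
  rewrite -swapk -[LHS]mul1mx eu mulmxDl -(mulmxA u.1) -(mulmxA u.2) kh fh !mulmx0 addr0 //.
have : (A *m Bs) ^+ m = A *m (Bs *m (A *m Bs) ^+ m.-1).
  by rewrite (expr_pred _ m0) mulmxA mulmxE.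
by rewrite e2 mulmx0 => e3; move: hN1; rewrite e3 eqxx.
Qed.


Theorem mainTheorem12 (F : fieldType) (n : nat) (A B As Bs : 'M[F]_n) :
  (0 < n)%N -> in_Il A B As Bs ->
  (exists W, is_socle (repn A B As Bs) W) /\
  (exists R, is_radical (repn A B As Bs) R) /\
  (* socle(T) = S_1 *)
  (forall W, is_socle (repn A B As Bs) W ->
     iso_subquot (S1 F) (repn A B As Bs) W (sub0 _)) /\
  (* top(T) = T / rad T = S_0 *)
  (forall R, is_radical (repn A B As Bs) R ->
     iso_subquot (S0 F) (repn A B As Bs) (subT _) R) /\
  (* ker(T/W -> S_0) = rad(T)/W is isomorphic to a point of I^r(n-1) *)
  (forall W R, is_socle (repn A B As Bs) W -> is_radical (repn A B As Bs) R ->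
     exists A' B' As' Bs' : 'M[F]_n.-1,
       in_Ir A' B' As' Bs' /\ iso_subquot (repn A' B' As' Bs') (repn A B As Bs) R W).
Proof.
case: n A B As Bs => // m A B As Bs n0 [[/= r1 r0 hpath] hA [hN hN1]].
have fA : row_full A by rewrite row_full_unit.
have hrk : \rank Bs = m.
  have := nil_rank n0 hN (introN eqP hN1); by rewrite (eqmxMfull _ fA).
have hS := S_simple n0 hA r1 hrk.
have hR := R_max n0 hA r0 hrk.
split.
  exists (0, kermx Bs); split.
    by move=> U hU; apply: simple_le hA r1 hN hU.
  exists [:: (0, kermx Bs)]; split; first by move=> U; rewrite inE => /eqP ->.
  by rewrite !big_seq1 /=; split; rewrite /= submx_refl.
split.
  exists (Bs, 1%:M); split.
    by move=> M hM; apply: max_ge n0 hA r0 hN hM.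
  exists [:: (Bs, 1%:M)]; split; first by move=> M; rewrite inE => /eqP ->.
  by rewrite !big_seq1 /=; split; rewrite /= submx_refl.
split.
  move=> W hW; apply: iso_transfer (socle_eq n0 hA r1 hN hrk hW) _ (iso_socle n0 hA r1 hrk).
  by split; rewrite /= submx_refl.
split.
  move=> R hR'; apply: iso_transfer _ (rad_eq n0 hA r0 hN hrk hR') (iso_top n0 hA r0 hrk).
  by split; rewrite /= submx_refl.
move=> W R hW hR'.
have [A' [B' [As' [Bs' [hI hiso]]]]] := third hA r1 r0 hpath hN (introN eqP hN1) hrk.
exists A', B', As', Bs'; split => //.
exact: iso_transfer (rad_eq n0 hA r0 hN hrk hR') (socle_eq n0 hA r1 hN hrk hW) hiso.
Qed.
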